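(* Consider NSGA-III (as defined in the context) on an arbitrary $m$-objective function $f:\{0,1\}^n\to\mathbb N_0^m$ with $\varepsilon_{\mathrm{nad}}\ge f_{\max}$ and reference set $\mathcal R_p$ with $p\ge 2m^{3/2}f_{\max}$, any population size, any initial population and any rule for choosing the extreme points. Then in every generation $t$, any two search points in $F^1_t$ that are associated with the same reference point of $\mathcal R_p$ have the same fitness vector.
   Context: Let $f=(f_1,\dots,f_m):\{0,1\}^n\to\mathbb N_0^m$ be an $m$-objective function to be maximized, and $f_{\max}:=\max\{f_j(x): x\in\{0,1\}^n, j\in[m]\}$, assumed $\ge 1$. For $x,y\in\{0,1\}^n$: $x\succeq y$ ($x$ weakly dominates $y$) iff $f_j(x)\ge f_j(y)$ for all $j$; $x\succ y$ iff $x\succeq y$ and $f_j(x)>f_j(y)$ for some $j$; $x,y$ are incomparable if neither $x\succeq y$ nor $y\succeq x$. For $p\in\mathbb N$ the reference set is $\mathcal R_p=\{(a_1/p,\dots,a_m/p): (a_1,\dots,a_m)\in\mathbb N_0^m,\ \sum_i a_i=p\}$. NSGA-III with population size $\mu$, threshold $\varepsilon_{\mathrm{nad}}>0$ and reference set $\mathcal R_p$: start with a population $P_0$ (a multiset of $\mu$ bit strings; arbitrary), $E_0=\{(-\infty,\dots,-\infty)\}$, $y^{\max}=(-\infty,\dots,-\infty)$, $y^{\min}=(+\infty,\dots,+\infty)$. In generation $t=0,1,2,\dots$: (1) Offspring: $Q_t$ consists of $\mu$ offspring, each created independently by choosing a parent uniformly at random from $P_t$ and flipping each of its bits independently with probability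 $1/n$. (2) Sorting: $R_t=P_t\cup Q_t$ (multiset of size $2\mu$) is partitioned into layers $F^1_t,\dots,F^k_t$, where $F^1_t$ consists of the members of $R_t$ not dominated (w.r.t. $\succ$) by any member of $R_t$, and $F^i_t$ consists of the members of $R_t\setminus(F^1_t\cup\dots\cup F^{i-1}_t)$ not dominated by any member of that set. Let $i^*$ be the index with $\sum_{i<i^*}|F^i_t|<\mu\le\sum_{i\le i^*}|F^i_t|$, and $Y_t=\bigcup_{i<i^*}F^i_t$. (3) Normalization: for each $j$, set $y^{\min}_j\leftarrow\min(y^{\min}_j,\min_{x\in R_t}f_j(x))$ and $y^{\max}_j\leftarrow\max(y^{\max}_j,\max_{x\in F^1_t}f_j(x))$ (so these are running extremes over all generations so far), and choose an extreme point $e^{(j)}\in f(Y_t\cup F^{i^*}_t)\cup E_t$ by some fixed rule (originally via an achievement scalarization function); set $E_{t+1}=\{e^{(1)},\dots,e^{(m)}\}$. If $e^{(1)},\dots,e^{(m)}$ are linearly independent, let $H$ be the affine hyperplane through them; if for every $j$ the hyperplane $H$ meets the $j$-th coordinate axis in exactly one point $I_j u_j$ ($u_j$ the $j$-th unit vector) with $\varepsilon_{\mathrm{nad}}\le I_j\le y^{\max}_j$, set $y^{\mathrm{nad}}_j=I_j$ for all $j$. Otherwise (including linear dependence) set $y^{\mathrm{nad}}_j=\max_{x\in F^1_t}f_j(x)$ for all $j$. Afterwards, for every $j$ with $y^{\mathrm{nad}}_j<y^{\min}_j+\varepsilon_{\mathrm{nad}}$, reset $y^{\mathrm{nad}}_j=\max_{x\in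 R_t}f_j(x)$. The normalized objectives are $f^n_j(x)=(f_j(x)-y^{\min}_j)/(y^{\mathrm{nad}}_j-y^{\min}_j)$ (with the convention $f^n_j(x):=0$ if the denominator is $0$), $f^n=(f^n_1,\dots,f^n_m)$. (4) Association: each $x\in Y_t\cup F^{i^*}_t$ is associated with a reference point $\mathrm{rp}(x)\in\mathcal R_p$ minimizing the Euclidean distance from $f^n(x)$ to the line $\{\lambda r:\lambda\in\mathbb R\}$ (equivalently, minimizing the angle between $f^n(x)$ and $r$); ties are broken by a deterministic rule depending only on $f^n(x)$. (5) Selection: let $\rho_r=|\{x\in Y_t:\mathrm{rp}(x)=r\}|$ for $r\in\mathcal R_p$, $\tilde F=\emptyset$, $R'=\mathcal R_p$. Repeat: choose $r\in R'$ with minimal $\rho_r$ (ties uniformly at random); if some $x\in F^{i^*}_t\setminus\tilde F$ has $\mathrm{rp}(x)=r$, add to $\tilde F$ such an $x$ minimizing the distance between $f^n(x)$ and $r$ (ties uniformly at random), increase $\rho_r$ by one, and stop as soon as $|Y_t|+|\tilde F|=\mu$; otherwise remove $r$ from $R'$. Set $P_{t+1}=Y_t\cup\tilde F$. *)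

(* Defs.v *)
From HB Require Import structures.
From mathcomp Require Import all_boot all_order all_algebra.
Set Implicit Arguments. Unset Strict Implicit. Unset Printing Implicit Defensive.
Import Order.TTheory GRing.Theory Num.Theory.
Local Open Scope ring_scope.

Section NSGA3.
Context (R : rcfType) (n m : nat) (f : {ffun 'I_n -> bool} -> 'I_m -> nat).
Context (mu p : nat) (eps : R).

Definition bs := {ffun 'I_n -> bool}.
Definition bs0 : bs := [ffun _ => false].

Definition fmax : nat := (\max_(x : bs) \max_(j < m) f x j)%N.

Definition wdom (x y : bs) : bool := [forall j, (f y j <= f x j)%N].
Definition sdom (x y : bs) : bool := wdom x y && [exists j, (f y j < f x j)%N].

(* R_t = P_t \cup Q_t as a multiset, indexed by 'I_(mu + mu) *)
Definition Iidx := 'I_(mu + mu).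
Definition Rpop (P Q : seq bs) (i : Iidx) : bs := nth bs0 (P ++ Q) i.

(* non-dominated sorting: layer g k is F^(k+1) *)
Definition nondom (g : Iidx -> bs) (S : {set Iidx}) : {set Iidx} :=
  [set i in S | [forall k in S, ~~ sdom (g k) (g i)]].
Definition remaining (g : Iidx -> bs) (k : nat) : {set Iidx} :=
  iter k (fun S => S :\: nondom g S) [set: Iidx].
Definition layer (g : Iidx -> bs) (k : nat) : {set Iidx} :=
  nondom g (remaining g k).
Definition below (g : Iidx -> bs) (k : nat) : {set Iidx} :=
  \bigcup_(k' < k) layer g k'.
(* k is (i star) - 1 (0-based index of the critical layer F^(i star)); then
   Y_t = below g k and F^(i star)_t = layer g k *)
Definition is_istar (g : Iidx -> bs) (k : nat) : bool :=
  (#|below g k| < mu)%N && (mu <= #|below g k.+1|)%N.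

Definition refpt := {ffun 'I_m -> 'I_p.+1}.
Definition inRp (a : refpt) : bool := (\sum_(j < m) (a j : nat))%N == p.
Definition rvec (a : refpt) : 'rV[R]_m := \row_j ((a j : nat)%:R / p%:R).

Definition sqnorm (v : 'rV[R]_m) : R := \sum_(j < m) v ord0 j ^+ 2.

(* dist(v, line through r) <= dist(v', line through r') ; the distance of v
   to the line {lam r} is min_lam |v - lam r| (attained), so this says
   min_lam |v - lam r| <= |v' - lam' r'| for every lam'.  Squared norms are
   used (same order). *)
Definition line_closer (v : 'rV[R]_m) (r : 'rV[R]_m) (v' : 'rV[R]_m) (r' : 'rV[R]_m) : Prop :=
  forall lam' : R, exists lam : R, sqnorm (v - lam *: r) <= sqnorm (v' - lam' *: r').

Definition assoc_ok (tb : 'rV[R]_m -> refpt) : Prop :=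
  forall v : 'rV[R]_m, inRp (tb v) /\
    forall r', inRp r' -> line_closer v (rvec (tb v)) v (rvec r').

(* bitwise mutation with rate 1/n: every bit flips with positive probability,
   and with probability 1 iff n <= 1 *)
Definition possible_mut (x y : bs) : Prop :=
  (n <= 1)%N -> forall i, y i != x i.

Definition fvec (x : bs) : {ffun 'I_m -> nat} := [ffun j => f x j].

(* lam u_j lies on the affine hull of the points e_1, ..., e_m *)
Definition onH (e : 'I_m -> {ffun 'I_m -> nat}) (j : 'I_m) (lam : R) : Prop :=
  exists c : 'I_m -> R, \sum_(i < m) c i = 1 /\
    forall k : 'I_m, lam * (k == j)%:R = \sum_(i < m) c i * (e i k)%:R.

Definition linind (e : 'I_m -> {ffun 'I_m -> nat}) : bool :=
  row_free (\matrix_(i < m, k < m) ((e i k)%:R : R)).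

(* extreme points es (None = the point (-oo,...,-oo) of E_0) *)
Definition nad_cond (es : 'I_m -> option {ffun 'I_m -> nat}) (ymaxv : 'I_m -> nat) : Prop :=
  exists e : 'I_m -> {ffun 'I_m -> nat}, (forall i, es i = Some (e i)) /\ linind e /\
    forall j, (exists! lam, onH e j lam) /\
      (forall lam, onH e j lam -> eps <= lam <= (ymaxv j)%:R).

(* the value of y^nad before the final reset step *)
Definition pre_nad (es : 'I_m -> option {ffun 'I_m -> nat}) (ymaxv maxF1v : 'I_m -> nat)
    (y : 'I_m -> R) : Prop :=
  (exists e : 'I_m -> {ffun 'I_m -> nat}, (forall i, es i = Some (e i)) /\ linind e /\
    forall j, (exists! lam, onH e j lam) /\
      (forall lam, onH e j lam -> eps <= lam <= (ymaxv j)%:R) /\ onH e j (y j))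
  \/ (~ nad_cond es ymaxv /\ forall j, y j = (maxF1v j)%:R).

Definition ynad (y : 'I_m -> R) (yminv maxRv : 'I_m -> nat) (j : 'I_m) : R :=
  if y j < (yminv j)%:R + eps then (maxRv j)%:R else y j.

Definition fnorm (y : 'I_m -> R) (yminv maxRv : 'I_m -> nat) (x : bs) : 'rV[R]_m :=
  \row_j (let d := ynad y yminv maxRv j - (yminv j)%:R in
          if d == 0 then 0 else ((f x j)%:R - (yminv j)%:R) / d).

Inductive sel_reach (Y Fi : {set Iidx}) (rp : Iidx -> refpt) (fnv : Iidx -> 'rV[R]_m) :
    (refpt -> nat) -> {set Iidx} -> {set refpt} -> {set Iidx} -> Prop :=
| sel_stop (rho : refpt -> nat) (Ft : {set Iidx}) (Rl : {set refpt}) :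
    (#|Y| + #|Ft|)%N = mu -> sel_reach Y Fi rp fnv rho Ft Rl Ft
| sel_add (rho : refpt -> nat) (Ft : {set Iidx}) (Rl : {set refpt}) (r : refpt) (x : Iidx) (out : {set Iidx}) :
    (#|Y| + #|Ft| < mu)%N -> r \in Rl -> (forall r', r' \in Rl -> (rho r <= rho r')%N) ->
    x \in Fi :\: Ft -> rp x = r ->
    (forall x', x' \in Fi :\: Ft -> rp x' = r -> line_closer (fnv x) (rvec r) (fnv x') (rvec r)) ->
    sel_reach Y Fi rp fnv (fun r' => if r' == r then (rho r).+1 else rho r') (x |: Ft) Rl out ->
    sel_reach Y Fi rp fnv rho Ft Rl out
| sel_drop (rho : refpt -> nat) (Ft : {set Iidx}) (Rl : {set refpt}) (r : refpt) (out : {set Iidx}) :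
    (#|Y| + #|Ft| < mu)%N -> r \in Rl -> (forall r', r' \in Rl -> (rho r <= rho r')%N) ->
    (forall x, x \in Fi :\: Ft -> rp x != r) ->
    sel_reach Y Fi rp fnv rho Ft (Rl :\ r) out ->
    sel_reach Y Fi rp fnv rho Ft Rl out.

Section Run.
Context (tb : 'rV[R]_m -> refpt)
        (P Q : nat -> seq bs)
        (ext : nat -> 'I_m -> option {ffun 'I_m -> nat}) (* ext t = E_(t+1) *)
        (kst : nat -> nat)                          (* kst t = i star - 1 in gen. t *)
        (pre : nat -> 'I_m -> R).

Definition gpop (t : nat) : Iidx -> bs := Rpop (P t) (Q t).
Definition F1 (t : nat) : {set Iidx} := layer (gpop t) 0.
Definition Yt (t : nat) : {set Iidx} := below (gpop t) (kst t).
Definition Fstar (t : nat) : {set Iidx} := layer (gpop t) (kst t).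

(* running extremes (all values are <= fmax, so fmax is a neutral element
   for the minimum over these nonempty families) *)
Definition ymin (t : nat) (j : 'I_m) : nat :=
  (\big[minn/fmax]_(s < t.+1) \big[minn/fmax]_(i : Iidx) f (gpop s i) j)%N.
Definition ymax (t : nat) (j : 'I_m) : nat :=
  (\max_(s < t.+1) \max_(i in F1 s) f (gpop s i) j)%N.
Definition maxF1 (t : nat) (j : 'I_m) : nat := (\max_(i in F1 t) f (gpop t i) j)%N.
Definition maxR (t : nat) (j : 'I_m) : nat := (\max_(i : Iidx) f (gpop t i) j)%N.

Definition fnv (t : nat) (i : Iidx) : 'rV[R]_m :=
  fnorm (pre t) (ymin t) (maxR t) (gpop t i).
Definition rp (t : nat) (i : Iidx) : refpt := tb (fnv t i).

Definition ext_ok (t : nat) (j : 'I_m) : Prop :=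
  (exists2 i, i \in Yt t :|: Fstar t & ext t j = Some (fvec (gpop t i)))
  \/ (t = 0%N /\ ext t j = None)
  \/ (exists t' k, t = t'.+1 /\ ext t j = ext t' k).

Definition selected (t : nat) : Prop :=
  exists out : {set Iidx},
    sel_reach (Yt t) (Fstar t) (rp t) (fnv t)
      (fun r => #|[set i in Yt t | rp t i == r]|) set0 [set r | inRp r] out
    /\ perm_eq (P t.+1) [seq gpop t i | i <- enum (Yt t :|: out)].

Definition is_run : Prop :=
  forall t : nat,
  size (P t) = mu /\ size (Q t) = mu /\
  (forall q, q \in Q t -> exists2 x, x \in P t & possible_mut x q) /\
  is_istar (gpop t) (kst t) /\
  (forall j, ext_ok t j) /\
  pre_nad (ext t) (ymax t) (maxF1 t) (pre t) /\
  selected t.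

Definition same_rp_same_fitness : Prop :=
  forall (t : nat) (i i' : Iidx), i \in F1 t -> i' \in F1 t ->
    rp t i = rp t i' -> forall j : 'I_m, f (gpop t i) j = f (gpop t i') j.
End Run.
End NSGA3.

(* Main.v *)
Require Import Defs.
From HB Require Import structures.
From mathcomp Require Import all_boot all_order all_algebra.
From mathcomp Require Import ring lra.
Import Order.TTheory GRing.Theory Num.Theory.
Local Open Scope ring_scope.

Section Round.
Variable R : rcfType.

Definition fl (p : nat) (x : R) : nat := (\max_(k < p.+1 | (k%:R <= x)%R) k)%N.

Lemma fl_le p x : (fl p x <= p)%N.
Proof. by apply/bigmax_leqP => k _; rewrite -ltnS. Qed.

Lemma fl_lex p x : 0 <= x -> (fl p x)%:R <= x.
Proof.
move=> x0; rewrite /fl; apply: (big_ind (fun k : nat => k%:R <= x)) => //.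
by move=> a b ha hb; rewrite /maxn; case: ifP.
Qed.

Lemma fl_gt p x : x <= p%:R -> x < (fl p x)%:R + 1.
Proof.
move=> hx; case: (ltnP (fl p x) p) => h.
  rewrite ltNge; apply/negP => hx'.
  have h1 : ((fl p x).+1 < p.+1)%N by [].
  have := @leq_bigmax_cond _ (fun k : 'I_p.+1 => (k%:R <= x)) (fun k : 'I_p.+1 => (k : nat)) (Ordinal h1).
  by rewrite /= -natr1 hx' => /(_ isT); rewrite -/(fl p x) ltnn.
have -> : fl p x = p by apply/eqP; rewrite eqn_leq fl_le h.
by rewrite (le_lt_trans hx) // ltrDl ltr01.
Qed.

Lemma fl_mono p x y : x <= y -> (fl p x <= fl p y)%N.
Proof.
move=> hxy; apply/bigmax_leqP => k hk.
by apply: (@leq_bigmax_cond _ (fun k : 'I_p.+1 => (k%:R <= y)) (fun k : 'I_p.+1 => (k : nat))); exact: le_trans hk hxy.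
Qed.

Lemma fl_p p : fl p p%:R = p.
Proof.
apply/eqP; rewrite eqn_leq fl_le /=.
by have := @leq_bigmax_cond _ (fun k : 'I_p.+1 => (k%:R <= p%:R :> R)) (fun k : 'I_p.+1 => (k : nat)) ord_max (lexx _).
Qed.

Lemma fl_0 p : fl p 0 = 0%N.
Proof.
have h := @fl_lex p 0 (lexx _).
by apply/eqP; rewrite -leqn0 -(ler_nat R); exact: h.
Qed.

Lemma round m p (w : 'I_m -> R) : (0 < p)%N -> (forall i, 0 <= w i) ->
  \sum_i w i = 1 ->
  exists a : refpt m p, inRp a /\ forall i, `|((a i : nat)%:R : R) - p%:R * w i| < 1.
Proof.
move=> p0 w0 w1.
pose ws (k : nat) : R := if (insub k : option 'I_m) is Some o then w o else 0.
pose S k := \sum_(0 <= i < k) ws i.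
pose A k := fl p (p%:R * S k).
have wsE : forall o : 'I_m, ws o = w o by move=> o; rewrite /ws valK.
have ws0 : forall k, 0 <= ws k by move=> k; rewrite /ws; case: insub.
have Smono : forall k l, (k <= l)%N -> S k <= S l.
  move=> k l kl; rewrite /S (@big_cat_nat _ _ _ k 0 l _ _ (leq0n k) kl) /= lerDl.
  by apply: sumr_ge0 => *.
have Sm : S m = 1.
  rewrite /S big_mkord -w1; apply: eq_bigr => o _; exact: wsE.
have S0 : S 0%N = 0 by rewrite /S big_geq.
have Sge0 : forall k, 0 <= S k by move=> k; rewrite -S0 Smono.
have Aok : forall k, (k <= m)%N -> (A k)%:R <= p%:R * S k < (A k)%:R + 1.
  move=> k km; rewrite fl_lex ?mulr_ge0 //= fl_gt //.
  by rewrite -[X in _ <= X]mulr1 ler_wpM2l // -Sm Smono.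
have Amono : {homo A : x y / (x <= y)%N}.
  by move=> x y xy; apply: fl_mono; rewrite ler_wpM2l // Smono.
pose a (o : 'I_m) : 'I_p.+1 := inord (A o.+1 - A o).
have aE : forall o, (a o : nat) = (A o.+1 - A o)%N.
  move=> o; rewrite inordK // ltnS; exact: leq_trans (leq_subr _ _) (fl_le _ _).
exists [ffun o => a o]; split.
  rewrite /inRp; apply/eqP.
  under eq_bigr do rewrite ffunE aE.
  rewrite -(big_mkord xpredT (fun k => A k.+1 - A k)%N) telescope_sumn //.
  by rewrite /A Sm S0 mulr1 mulr0 fl_p fl_0 subn0.
move=> o; rewrite ffunE aE natrB ?Amono //.
have hS : S o.+1 = S o + w o by rewrite /S big_nat_recr //= wsE.
have := Aok o (ltnW (ltn_ord o)); have := Aok o.+1 (ltn_ord o).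
rewrite hS mulrDr => /andP [h1 h2] /andP [h3 h4].
rewrite ltr_norml; apply/andP; split; lra.
Qed.

End Round.

Section Geo.
Variable R : rcfType.

Lemma close m p (F : R) (u : 'rV[R]_m) (r : refpt m p) :
  (0 < p)%N -> 0 < F -> 4%:R * (m%:R ^+ 3) * F ^+ 2 <= p%:R ^+ 2 ->
  (forall i, 0 <= u ord0 i <= 1) -> 0 < \sum_i u ord0 i ->
  (forall r2 : refpt m p, inRp r2 -> line_closer u (rvec R r) u (rvec R r2)) ->
  exists lam : R, forall i,
    4%:R * F ^+ 2 * (u ord0 i - lam * ((r i : nat)%:R / p%:R)) ^+ 2 < 1.
Proof.
move=> p0 F0 hp hu s0 hcl.
set s := \sum_i u ord0 i in s0.
have sn0 : s != 0 by rewrite gt_eqF.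
have pR0 : 0 < (p%:R : R) by rewrite ltr0n.
have hw1 : \sum_i u ord0 i / s = 1 by rewrite -mulr_suml mulfV.
have [a [Ha Hr]] := @round R m p (fun i => u ord0 i / s) p0
   (fun i => divr_ge0 (proj1 (andP (hu i))) (ltW s0)) hw1.
have [lam Hlam] := hcl a Ha s.
exists lam => i.
have h1 : (u ord0 i - lam * ((r i : nat)%:R / p%:R)) ^+ 2 <= sqnorm (u - lam *: rvec R r).
  rewrite /sqnorm (bigD1 i) //= !mxE lerDl; apply: sumr_ge0 => k _; exact: sqr_ge0.
have h2 : sqnorm (u - s *: rvec R a) < \sum_(k < m) (s / p%:R) ^+ 2.
  rewrite /sqnorm; apply: ltr_sum; first by apply/hasP; exists i; rewrite ?mem_index_enum.
  move=> k _; rewrite !mxE.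
  set X := ((a k : nat)%:R : R) - p%:R * (u ord0 k / s).
  have e : u ord0 k + - (s * ((a k : nat)%:R / p%:R)) = - (s / p%:R) * X.
    by rewrite /X; field; rewrite sn0 /= gt_eqF.
  rewrite e exprMn sqrrN -[X in _ < X]mulr1 ltr_pM2l ?exprn_gt0 ?divr_gt0 //.
  have := Hr k; rewrite -/X ltr_norml => /andP [hx1 hx2]; nra.
rewrite sumr_const card_ord in h2.
have sm : s <= m%:R.
  have : s <= \sum_(k < m) (1:R) by apply: ler_sum => k _; exact: proj2 (andP (hu k)).
  by rewrite sumr_const card_ord.
have hF : 0 <= 4%:R * F ^+ 2 by rewrite mulr_ge0 // exprn_ge0 // ltW.
have h3 : 4%:R * F ^+ 2 * (m%:R * (s / p%:R) ^+ 2) <= 1.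
  have -> : 4%:R * F ^+ 2 * (m%:R * (s / p%:R) ^+ 2) = (4%:R * F ^+ 2 * m%:R * s ^+ 2) / p%:R ^+ 2.
    by field; rewrite gt_eqF.
  rewrite ler_pdivrMr ?exprn_gt0 // mul1r.
  have s2 : s ^+ 2 <= m%:R ^+ 2 by nra.
  apply: le_trans hp.
  have -> : 4%:R * m%:R ^+ 3 * F ^+ 2 = 4%:R * F ^+ 2 * m%:R * m%:R ^+ 2 by ring.
  by rewrite ler_wpM2l // mulr_ge0.
apply: le_lt_trans (ler_wpM2l hF (le_trans h1 (Hlam))) _.
apply: lt_le_trans h3.
rewrite ltr_pM2l; first by rewrite mulr_natl.
by rewrite mulr_gt0 // exprn_gt0.
Qed.

Lemma contra4 (F uj vj uk vk rj rk lam mu : R) : 0 < F -> 0 <= rj -> 0 <= rk ->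
  1 <= F * (uj - vj) -> 1 <= F * (vk - uk) ->
  4%:R * F ^+ 2 * (uj - lam * rj) ^+ 2 < 1 ->
  4%:R * F ^+ 2 * (uk - lam * rk) ^+ 2 < 1 ->
  4%:R * F ^+ 2 * (vj - mu * rj) ^+ 2 < 1 ->
  4%:R * F ^+ 2 * (vk - mu * rk) ^+ 2 < 1 -> False.
Proof.
move=> F0 rj0 rk0 h1 h2 e1 e2 e3 e4.
have sq : forall e : R, 4%:R * F ^+ 2 * e ^+ 2 < 1 -> -1 < 2%:R * F * e < 1.
  move=> e he; apply/andP; split; nra.
have /andP [a1 a2] := sq _ e1; have /andP [b1 b2] := sq _ e2.
have /andP [c1 c2] := sq _ e3; have /andP [d1 d2] := sq _ e4.
case: (lerP lam mu) => hlm.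
  have : F * ((lam - mu) * rj) <= 0.
    by rewrite pmulr_rle0 // mulr_le0_ge0 // subr_le0.
  move=> hh; nra.
have : 0 <= F * ((lam - mu) * rk).
  by rewrite pmulr_rge0 // mulr_ge0 // subr_ge0 ltW.
move=> hh; nra.
Qed.
End Geo.

Lemma bigmin_le (I : eqType) (s : seq I) (F : I -> nat) c x :
  x \in s -> (\big[minn/c]_(i <- s) F i <= F x)%N.
Proof.
elim: s => //= y s IH; rewrite in_cons big_cons => /orP [/eqP-> | h].
  exact: geq_minl.
exact: leq_trans (geq_minr _ _) (IH h).
Qed.

Section Run.
Variables (R : rcfType) (n m : nat) (f : {ffun 'I_n -> bool} -> 'I_m -> nat)
    (mu p : nat) (eps : R)
    (tb : 'rV[R]_m -> refpt m p)
    (P Q : nat -> seq (bs n))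
    (ext : nat -> 'I_m -> option {ffun 'I_m -> nat})
    (kst : nat -> nat) (pre : nat -> 'I_m -> R).

Lemma f_le x j : (f x j <= fmax f)%N.
Proof.
apply: leq_trans (leq_bigmax (F := fun x => \max_(j < m) f x j) x).
exact: (leq_bigmax (F := f x)).
Qed.

Lemma ymin_le t j (i : Iidx mu) : (ymin f mu P Q t j <= f (gpop P Q t i) j)%N.
Proof.
rewrite /ymin.
set G := fun s : 'I_t.+1 => (\big[minn/fmax f]_(i0 : Iidx mu) f (gpop P Q s i0) j)%N.
have := @bigmin_le _ _ G (fmax f) _ (mem_index_enum ord_max).
move/leq_trans; apply; rewrite /G /=.
exact: bigmin_le (mem_index_enum i).
Qed.

Lemma maxR_ge t j (i : Iidx mu) : (f (gpop P Q t i) j <= maxR f mu P Q t j)%N.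
Proof. exact: (leq_bigmax (F := fun i => f (gpop P Q t i) j)). Qed.

Lemma maxR_le t j : (maxR f mu P Q t j <= fmax f)%N.
Proof. apply/bigmax_leqP => i _; exact: f_le. Qed.

Lemma pre_le t j : pre_nad eps (ext t) (ymax f mu P Q t) (maxF1 f mu P Q t) (pre t) ->
  pre t j <= (fmax f)%:R.
Proof.
case=> [[e [_ [_ H]]] | [_ H]].
  have [_ [bnd onj]] := H j; have /andP [_ h] := bnd _ onj.
  apply: le_trans h _; rewrite ler_nat.
  apply/bigmax_leqP => s _; apply/bigmax_leqP => i _; exact: f_le.
rewrite H ler_nat; apply/bigmax_leqP => i _; exact: f_le.
Qed.

Definition dd t j := ynad eps (pre t) (ymin f mu P Q t) (maxR f mu P Q t) j - (ymin f mu P Q t j)%:R.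

Lemma dd_bnd t j (i : Iidx mu) : (fmax f)%:R <= eps -> pre t j <= (fmax f)%:R ->
  (0 : R) <= (f (gpop P Q t i) j)%:R - (ymin f mu P Q t j)%:R <= dd t j /\ dd t j <= (fmax f)%:R.
Proof.
move=> he hp.
have h1 : ((ymin f mu P Q t j)%:R : R) <= (f (gpop P Q t i) j)%:R by rewrite ler_nat ymin_le.
have h2 : ((f (gpop P Q t i) j)%:R : R) <= (maxR f mu P Q t j)%:R by rewrite ler_nat maxR_ge.
have h3 : ((maxR f mu P Q t j)%:R : R) <= (fmax f)%:R by rewrite ler_nat maxR_le.
have h4 : 0 <= ((ymin f mu P Q t j)%:R : R) by [].
rewrite /dd /ynad; case: ifP => hlt.
  split; [apply/andP; split|]; lra.
move/negbT: hlt; rewrite -leNgt => hlt.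
split; [apply/andP; split|]; lra.
Qed.

Definition ncoord (a d : R) : R := if d == 0 then 0 else a / d.

Lemma fnvE t (i : Iidx mu) j : fnv f eps P Q pre t i ord0 j =
  ncoord ((f (gpop P Q t i) j)%:R - (ymin f mu P Q t j)%:R) (dd t j).
Proof. by rewrite /fnv /fnorm mxE. Qed.

Lemma ncoord01 a d : 0 <= a <= d -> 0 <= ncoord a d <= 1.
Proof.
move=> /andP [a0 ad]; rewrite /ncoord; case: ifP => hd; first by rewrite lexx ler01.
have d0 : 0 < d by rewrite lt_def hd (le_trans a0 ad).
by rewrite divr_ge0 ?ler_pdivrMr ?mul1r // ltW.
Qed.

Lemma ncoord_gap (F ax ay d : R) : 0 < F -> 0 <= ay -> ay + 1 <= ax -> ax <= d -> d <= F ->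
  1 <= F * (ncoord ax d - ncoord ay d) /\ 0 < ncoord ax d.
Proof.
move=> F0 ay0 axy axd dF.
have d0 : 0 < d by lra.
rewrite /ncoord gt_eqF //; split; last by rewrite divr_gt0 //; lra.
rewrite -mulrBl mulrA ler_pdivlMr // mul1r; nra.
Qed.

Lemma key t (i i' : Iidx mu) (j k : 'I_m) :
  (fmax f)%:R <= eps ->
  2%:R * m%:R * Num.sqrt (m%:R) * (fmax f)%:R <= p%:R :> R ->
  (1 <= fmax f)%N ->
  assoc_ok tb -> is_run f mu eps tb P Q ext kst pre ->
  rp f eps tb P Q pre t i = rp f eps tb P Q pre t i' ->
  (f (gpop P Q t i') j < f (gpop P Q t i) j)%N ->
  (f (gpop P Q t i) k < f (gpop P Q t i') k)%N -> False.
Proof.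
move=> he hp hF ha hr hrp hj hk.
set F : R := (fmax f)%:R.
have F0 : 0 < F by rewrite ltr0n.
have [_ [_ [_ [_ [_ [hpn _]]]]]] := hr t.
have sqm : Num.sqrt (m%:R : R) ^+ 2 = m%:R := sqr_sqrtr (ler0n _ _).
have m0 : (0 < m)%N := leq_ltn_trans (leq0n j) (ltn_ord j).
have s0 : 0 < Num.sqrt (m%:R : R) by rewrite sqrtr_gt0 ltr0n.
have Hpos : 0 <= 2%:R * m%:R * Num.sqrt (m%:R : R) * F by rewrite !mulr_ge0 // ltW.
have hp2 : 4%:R * m%:R ^+ 3 * F ^+ 2 <= p%:R ^+ 2.
  have e : 4%:R * m%:R ^+ 3 * F ^+ 2 = (2%:R * m%:R * Num.sqrt (m%:R : R) * F) * (2%:R * m%:R * Num.sqrt (m%:R : R) * F).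
    transitivity (4%:R * m%:R ^+ 2 * (Num.sqrt (m%:R : R) ^+ 2) * F ^+ 2); first by rewrite sqm; ring.
    by ring.
  rewrite e expr2; exact (ler_pM Hpos Hpos hp hp).
have p0 : (0 < p)%N.
  by rewrite -(ltr0n R); apply: lt_le_trans hp; rewrite !mulr_gt0 // ltr0n.
have hpl := fun l => @pre_le t l hpn.
have hcoord : forall (x : Iidx mu) l, 0 <= fnv f eps P Q pre t x ord0 l <= 1.
  move=> x l; rewrite fnvE; have [h1 _] := dd_bnd t l x he (hpl l); exact: ncoord01.
have gap : forall (x y : Iidx mu) l, (f (gpop P Q t y) l < f (gpop P Q t x) l)%N ->
   1 <= F * (fnv f eps P Q pre t x ord0 l - fnv f eps P Q pre t y ord0 l) /\ 0 < fnv f eps P Q pre t x ord0 l.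
  move=> x y l hl; rewrite !fnvE.
  have [/andP [_ hx] dx] := dd_bnd t l x he (hpl l).
  have [/andP [hy _] _] := dd_bnd t l y he (hpl l).
  have hn : ((f (gpop P Q t y) l).+1%:R : R) <= (f (gpop P Q t x) l)%:R by rewrite ler_nat.
  rewrite -natr1 in hn.
  apply: ncoord_gap => //; lra.
have [gj uj0] := gap i i' j hj.
have [gk vk0] := gap i' i k hk.
have sump : forall (x : Iidx mu) l, 0 < fnv f eps P Q pre t x ord0 l -> 0 < \sum_l0 fnv f eps P Q pre t x ord0 l0.
  move=> x l hl; rewrite (bigD1 l) //=.
  have : 0 <= \sum_(l0 | l0 != l) fnv f eps P Q pre t x ord0 l0.
    by apply: sumr_ge0 => l0 _; case/andP: (hcoord x l0).
  lra.
have [_ hu] := ha (fnv f eps P Q pre t i).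
have [_ hv] := ha (fnv f eps P Q pre t i').
rewrite /rp in hrp; rewrite -hrp in hv.
pose proof (@close R _ _ _ _ _ p0 F0 hp2 (hcoord i) (sump _ _ uj0) hu) as c1.
pose proof (@close R _ _ _ _ _ p0 F0 hp2 (hcoord i') (sump _ _ vk0) hv) as c2.
have [lam Hl] := c1. have [mu' Hm] := c2.
apply: (@contra4 R _ _ _ _ _ _ _ _ _ F0 _ _ gj gk (Hl j) (Hl k) (Hm j) (Hm k)); by rewrite divr_ge0.
Qed.

End Run.

Theorem lemma3 (R : rcfType) (n m : nat) (f : {ffun 'I_n -> bool} -> 'I_m -> nat)
    (mu p : nat) (eps : R)
    (tb : 'rV[R]_m -> refpt m p)
    (P Q : nat -> seq (bs n))
    (ext : nat -> 'I_m -> option {ffun 'I_m -> nat})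
    (kst : nat -> nat) (pre : nat -> 'I_m -> R) :
  (1 <= fmax f)%N ->
  (1 <= mu)%N ->
  (fmax f)%:R <= eps ->
  2%:R * m%:R * Num.sqrt (m%:R) * (fmax f)%:R <= p%:R :> R ->
  assoc_ok tb ->
  is_run f mu eps tb P Q ext kst pre ->
  same_rp_same_fitness f mu eps tb P Q pre.
Proof.
move=> hF hmu he hp ha hr t i i' Hi Hi' Hrp j.
have nd : forall a b : Iidx mu, a \in F1 f mu P Q t -> ~~ sdom f (gpop P Q t b) (gpop P Q t a).
  move=> a b; rewrite /F1 /layer /nondom inE => /andP [_ /forallP /(_ b)].
  by rewrite /remaining /= in_setT.
case: (ltngtP (f (gpop P Q t i) j) (f (gpop P Q t i') j)) => // hlt.
  have : ~~ wdom f (gpop P Q t i') (gpop P Q t i).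
    apply: contra (nd _ i' Hi) => hw; rewrite /sdom hw /=; apply/existsP; by exists j.
  rewrite /wdom negb_forall => /existsP [k]; rewrite -ltnNge => hk.
  by case: (@key _ _ _ _ _ _ _ _ _ _ _ _ _ t i i' k j he hp hF ha hr Hrp hk hlt).
have : ~~ wdom f (gpop P Q t i) (gpop P Q t i').
  apply: contra (nd _ i Hi') => hw; rewrite /sdom hw /=; apply/existsP; by exists j.
rewrite /wdom negb_forall => /existsP [k]; rewrite -ltnNge => hk.
by case: (@key _ _ _ _ _ _ _ _ _ _ _ _ _ t i' i k j he hp hF ha hr (esym Hrp) hk hlt).
Qed.
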